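(* Let $\Gamma=\langle x,y,z\mid x^2=y^2=z^2=e,\ xy^{-1}=yx^{-1},\ xz^{-1}=zx^{-1},\ yz^{-1}=zy^{-1}\rangle$ (so that $\Gamma\cong(\mathbb{Z}/2)^3$ and $C_\Delta(\Gamma)$ is the hypercube of dimension 3), with $\Delta=\{x,y,z\}$. There is no homogeneous scalar quantum walk on $C_\Delta(\Gamma)$.
   Context: The Cayley graph $C_\Delta(\Gamma)$ has vertex set $\Gamma$ and directed edges $(g,g\delta)$, $g\in\Gamma,\delta\in\Delta$. Let $\ell^2(\Gamma)$ have orthonormal basis $\{|g\rangle\}_{g\in\Gamma}$ and for $\delta\in\Gamma$ let $U_\delta|g\rangle=|g\delta\rangle$. A homogeneous scalar quantum walk on $C_\Delta(\Gamma)$ is a unitary operator $W=\sum_{\delta\in\Delta}W_\delta U_\delta$ with all complex coefficients $W_\delta$ nonzero. *)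

(* Defs.v *)
From HB Require Import structures.
From mathcomp Require Import all_boot all_order all_algebra.
From mathcomp Require Import complex reals.
Set Implicit Arguments. Unset Strict Implicit. Unset Printing Implicit Defensive.
Import Order.TTheory GRing.Theory Num.Theory.
Local Open Scope ring_scope.

(* Gamma = (Z/2)^3, elements as bool triples, group law = componentwise xor.
   This is the group <x,y,z | x^2=y^2=z^2=e, xy^-1=yx^-1, ...>. *)
Definition Gam := (bool * bool * bool)%type.
Definition gmul (g h : Gam) : Gam :=
  let: (a1, a2, a3) := g in let: (b1, b2, b3) := h in
  (xorb a1 b1, xorb a2 b2, xorb a3 b3).

Definition gen (i : 'I_3) : Gam :=
  if val i == 0%N then (true, false, false)
  else if val i == 1%N then (false, true, false)
  else (false, false, true).

(* Operators on l^2(Gam) (finite-dimensional), as kernels: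
   op h g = <h| A |g>. *)
Definition op (C : Type) := Gam -> Gam -> C.

(* U_delta |g> = |g delta>, i.e. <h|U_delta|g> = [h == g delta]. *)
Definition shiftU (C : nzRingType) (d : Gam) : op C :=
  fun h g => (h == gmul g d)%:R.

Definition op_comp (C : nzRingType) (A B : op C) : op C :=
  fun h g => \sum_(k : Gam) A h k * B k g.

Definition op_adj (C : numClosedFieldType) (A : op C) : op C :=
  fun h g => (A g h)^*.

Definition op_id (C : nzRingType) : op C := fun h g => (h == g)%:R.

Definition unitary (C : numClosedFieldType) (A : op C) : Prop :=
  op_comp (op_adj A) A = op_id C /\ op_comp A (op_adj A) = op_id C.

Definition walk (C : nzRingType) (w : 'I_3 -> C) : op C :=
  fun h g => \sum_(i < 3) w i * shiftU C (gen i) h g.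

Definition homogeneous_scalar_QW (R : realType) (w : 'I_3 -> R[i]) : Prop :=
  unitary (walk w) /\ (forall i, w i != 0).

(* Main.v *)
From mathcomp Require Import all_boot all_order all_algebra.
From mathcomp Require Import complex reals ring lra.
Import Order.TTheory GRing.Theory Num.Theory.
Local Open Scope ring_scope.
Lemma pos2 (R : realType) (x y : R) : ~~ ((x == 0) && (y == 0)) -> 0 < x^+2 + y^+2.
Require Import Defs.
Proof.
case/nandP => /negPf H.
  by rewrite ltr_pwDl ?sqr_ge0 // lt_def sqrf_eq0 H sqr_ge0.
by rewrite ltr_pwDr ?sqr_ge0 // lt_def sqrf_eq0 H sqr_ge0.
Qed.
Lemma key (R : realType) (a b c : R[i]) : a != 0 -> b != 0 -> c != 0 ->
  a^* * b + b^* * a = 0 -> a^* * c + c^* * a = 0 -> b^* * c + c^* * b = 0 -> False.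
Proof.
case: a => a1 a2; case: b => b1 b2; case: c => c1 c2.
rewrite !eq_complex /= => /pos2 Pa /pos2 Pb /pos2 Pc.
move=> /eqP; rewrite eq_complex /= => /andP[/eqP E1 _].
move=> /eqP; rewrite eq_complex /= => /andP[/eqP E2 _].
move=> /eqP; rewrite eq_complex /= => /andP[/eqP E3 _].
have e1 : a1 * b1 + a2 * b2 = 0 by lra.
have e2 : a1 * c1 + a2 * c2 = 0 by lra.
have e3 : b1 * c1 + b2 * c2 = 0 by lra.
set X := a1 * b2 - a2 * b1; set Y := a1 * c2 - a2 * c1.
have hX : (a1^+2 + a2^+2) * (b1^+2 + b2^+2) = X^+2 + (a1 * b1 + a2 * b2)^+2 by rewrite /X; ring.
have hY : (a1^+2 + a2^+2) * (c1^+2 + c2^+2) = Y^+2 + (a1 * c1 + a2 * c2)^+2 by rewrite /Y; ring.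
have hXY : (a1^+2 + a2^+2) * (b1 * c1 + b2 * c2) = X * Y + (a1 * b1 + a2 * b2) * (a1 * c1 + a2 * c2) by rewrite /X /Y; ring.
rewrite e1 expr0n /= addr0 in hX; rewrite e2 expr0n /= addr0 in hY; rewrite e1 e2 e3 mulr0 mulr0 addr0 in hXY.
move: hXY => /esym /eqP; rewrite mulf_eq0 => /orP[] /eqP Z.
  by move: hX; rewrite Z expr0n /= => /eqP; rewrite mulf_eq0 !gt_eqF.
by move: hY; rewrite Z expr0n /= => /eqP; rewrite mulf_eq0 !gt_eqF.
Qed.
Lemma sumPair (V : nmodType) (I J : finType) (F : I * J -> V) :
  \sum_(p : I * J) F p = \sum_(i : I) \sum_(j : J) F (i, j).
Proof. rewrite pair_big; apply: eq_bigr => -[a b] _ //. Qed.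
Lemma sumGam (V : nmodType) (F : Gam -> V) : \sum_(k : Gam) F k =
  F (true,true,true) + F (true,true,false) + (F (true,false,true) + F (true,false,false)) +
  (F (false,true,true) + F (false,true,false) + (F (false,false,true) + F (false,false,false))).
Proof.
rewrite sumPair; under eq_bigr do rewrite big_bool. rewrite sumPair !big_bool. by [].
Qed.
Theorem mainTheorem7 (R : realType) :
  ~ exists w : 'I_3 -> R[i], homogeneous_scalar_QW w.
Proof.
move=> [w [[H1 _] Hnz]].
have E1 := congr1 (fun A => A (true,true,false) (false,false,false)) H1.
have E2 := congr1 (fun A => A (true,false,true) (false,false,false)) H1.
have E3 := congr1 (fun A => A (false,true,true) (false,false,false)) H1.
rewrite /op_comp /op_adj /walk /op_id /shiftU sumGam /= !big_ord_recl !big_ord0 /= in E1.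
rewrite /op_comp /op_adj /walk /op_id /shiftU sumGam /= !big_ord_recl !big_ord0 /= in E2.
rewrite /op_comp /op_adj /walk /op_id /shiftU sumGam /= !big_ord_recl !big_ord0 /= in E3.
rewrite !(mulr0, mulr1, addr0, add0r, conjC0, mul0r) in E1.
rewrite !(mulr0, mulr1, addr0, add0r, conjC0, mul0r) in E2.
rewrite !(mulr0, mulr1, addr0, add0r, conjC0, mul0r) in E3.
rewrite addrC in E1; rewrite addrC in E2; rewrite addrC in E3.
have Ha := Hnz ord0; have Hb := Hnz (lift ord0 ord0); have Hc := Hnz (lift ord0 (lift ord0 ord0)).
move: Ha Hb Hc E1 E2 E3.
move: (w ord0) (w (lift ord0 ord0)) (w (lift ord0 (lift ord0 ord0))) => a b c.
exact: (@key R a b c).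
Qed.
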